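(* For all integers $m\ge 1$ and $n\ge0$, $$\sum_{k=0}^{n}\begin{bmatrix}n\\k\end{bmatrix}q^{\binom k2}\,[m+2k]\,\frac{[m+k-1]!}{[m+n+k]!}=\frac{(-1;q)_n}{[m+1]\,[m+3]\cdots[m+2n-1]},$$ the empty product for $n=0$ being $1$. Equivalently, for an indeterminate $a$, $$\sum_{k=0}^{n}\begin{bmatrix}n\\k\end{bmatrix}q^{\binom k2}\frac{1-q^{2k}a}{(q^ka;q)_{n+1}}=\frac{(-1;q)_n}{(qa;q^2)_n}.$$
   Context: $q$ is an indeterminate; $[n]=\frac{1-q^n}{1-q}$, $[n]!=[1]\cdots[n]$, $[0]!=1$, $\begin{bmatrix}n\\k\end{bmatrix}=\frac{[n]!}{[k]![n-k]!}$; $(a;q)_n=(1-a)(1-qa)\cdots(1-q^{n-1}a)$, $(a;q)_0=1$. *)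

(* Defs.v *)
From HB Require Import structures.
From mathcomp Require Import all_boot all_order all_algebra.
Set Implicit Arguments. Unset Strict Implicit. Unset Printing Implicit Defensive.
Import Order.TTheory GRing.Theory Num.Theory.
Local Open Scope ring_scope.

Definition Qq := {fraction {poly rat}}.
Definition qvar : Qq := @tofrac _ ('X : {poly rat}).

Section QDefs.
Variable F : fieldType.
Variable q : F.

Definition qint (n : nat) : F := (1 - q ^+ n) / (1 - q).
Definition qfact (n : nat) : F := \prod_(1 <= i < n.+1) qint i.
Definition qbinom (n k : nat) : F := qfact n / (qfact k * qfact (n - k)).
Definition qpoch (a : F) (n : nat) : F := \prod_(i < n) (1 - q ^+ i * a).
End QDefs.

(* Main.v *)
Require Import Defs.
From HB Require Import structures.
From mathcomp Require Import all_boot all_order all_algebra.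
From mathcomp Require Import ring zify.
Import GRing.Theory.
Local Open Scope ring_scope.

Section S.
Variable F : fieldType.
Variable q : F.
Hypothesis h1 : 1 - q != 0.
Hypothesis hI : forall i, (0 < i)%N -> 1 - q ^+ i != 0.

Lemma qfS i : qfact q i.+1 = qfact q i * qint q i.+1.
Proof. by rewrite /qfact big_nat_recr. Qed.

Lemma hS e : (1 - q ^+ e.+1 != 0) = true.
Proof. exact: hI. Qed.

Lemma qint_neq0 i : (0 < i)%N -> qint q i != 0.
Proof. move=> hi; rewrite /qint mulf_neq0 ?invr_eq0 //; exact: hI. Qed.

Lemma qfact_neq0 i : qfact q i != 0.
Proof.
elim: i => [|i IH]; first by rewrite /qfact big_geq // oner_neq0.
by rewrite qfS mulf_neq0 // qint_neq0.
Qed.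


Variable p : nat.
Definition t n k := qbinom q n k * q^+'C(k,2) * qint q (p.+1 + 2*k) * (qfact q (p.+1 + k - 1) / qfact q (p.+1 + n + k)).
Definition H n k := - (q^+n * q^+'C(k,2) * qint q (p.+1 + 2*k + 1) * qbinom q n k * (qfact q (p.+1 + k) / qfact q (p.+1 + n + k + 1))).
Definition cc n := qint q (p.+1 + 2 * n + 1).
Definition dd n := 1 + q ^+ n.

Lemma Ek j r : cc (j.+1 + r) * t (j.+1 + r).+1 j.+1 - dd (j.+1 + r) * t (j.+1 + r) j.+1
   = H (j.+1 + r) j.+1 - H (j.+1 + r) j.
Proof.
rewrite /cc /dd /t /H /qbinom.
have -> : (p.+1 + (j.+1 + r) + j.+1 + 1 = (p+j+j+r).+4)%N by lia.
have -> : (p.+1 + (j.+1 + r) + j + 1 = (p+j+j+r).+3)%N by lia.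
have -> : (p.+1 + (j.+1 + r).+1 + j.+1 = (p+j+j+r).+4)%N by lia.
have -> : (p.+1 + (j.+1 + r) + j.+1 = (p+j+j+r).+3)%N by lia.
have -> : (p.+1 + j.+1 - 1 = (p+j).+1)%N by lia.
have -> : (p.+1 + j.+1 = (p+j).+2)%N by lia.
have -> : (p.+1 + j = (p+j).+1)%N by lia.
have -> : ((j.+1 + r).+1 - j.+1 = r.+1)%N by lia.
have -> : ((j.+1 + r) - j.+1 = r)%N by lia.
have -> : ((j.+1 + r) - j = r.+1)%N by lia.
have -> : (j.+1 + r = (j+r).+1)%N by lia.
rewrite !binS !bin1 !qfS.
have := qfact_neq0 (j+r); have := qfact_neq0 j; have := qfact_neq0 r;
have := qfact_neq0 (p+j); have := qfact_neq0 (p+j+j+r).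
generalize (qfact q (j+r)) (qfact q j) (qfact q r) (qfact q (p+j)) (qfact q (p+j+j+r)).
move=> f1 f2 f3 f4 f5 n5 n4 n3 n2 n1.
rewrite /qint !mul2n -!addnn !addSn !addnS !exprS !exprD ?addn1 ?exprS ?expr0 ?expr1.
by field; rewrite -!exprD -!exprS !hS h1 ?n1 ?n2 ?n3 ?n4 ?n5.
Qed.

Lemma qf0 : qfact q 0 = 1.
Proof. by rewrite /qfact big_geq. Qed.

Lemma E0 n : cc n * t n.+1 0 - dd n * t n 0 = H n 0.
Proof.
rewrite /cc /dd /t /H /qbinom.
have -> : (p.+1 + n.+1 + 0 = (p+n).+2)%N by lia.
have -> : (p.+1 + n + 0 + 1 = (p+n).+2)%N by lia.
have -> : (p.+1 + n + 0 = (p+n).+1)%N by lia.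
have -> : (p.+1 + 0 - 1 = p)%N by lia.
have -> : (p.+1 + 0 = p.+1)%N by lia.
rewrite !subn0 ?bin0 ?bin0n !qfS qf0.
have := qfact_neq0 n; have := qfact_neq0 p; have := qfact_neq0 (p+n).
generalize (qfact q n) (qfact q p) (qfact q (p+n)).
move=> f1 f2 f3 n3 n2 n1.
rewrite /qint !mul2n -!addnn !addSn !addnS !exprS !exprD ?addn0 ?addn1 ?exprS ?expr0 ?expr1.
by field; rewrite -!exprD -!exprS !hS h1 ?n1 ?n2 ?n3.
Qed.

Lemma Elast n : cc n * t n.+1 n.+1 = - H n n.
Proof.
rewrite /cc /t /H /qbinom.
have -> : (p.+1 + n.+1 + n.+1 = (p+n+n).+3)%N by lia.
have -> : (p.+1 + n + n + 1 = (p+n+n).+2)%N by lia.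
have -> : (p.+1 + n.+1 - 1 = (p+n).+1)%N by lia.
have -> : (p.+1 + n = (p+n).+1)%N by lia.
rewrite !subnn !binS !bin1 !qfS qf0.
have := qfact_neq0 n; have := qfact_neq0 (p+n); have := qfact_neq0 (p+n+n).
generalize (qfact q n) (qfact q (p+n)) (qfact q (p+n+n)).
move=> f1 f2 f3 n3 n2 n1.
rewrite /qint !mul2n -!addnn !addSn !addnS !exprS !exprD ?addn0 ?addn1 ?exprS ?expr0 ?expr1.
by field; rewrite -!exprD -!exprS !hS h1 ?n1 ?n2 ?n3.
Qed.

Definition A n := \sum_(0 <= k < n.+1) t n k.

Lemma stepA n : cc n * A n.+1 = dd n * A n.
Proof.
rewrite /A big_nat_recr //= mulrDr Elast mulr_sumr mulr_sumr.
apply/eqP; rewrite -subr_eq0 addrAC -sumrB.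
rewrite (@telescope_sumr_eq _ 0 n.+1 (fun k => if k is k'.+1 then H n k' else 0)) //; first by rewrite subr0 subrr.
move=> k /andP [_ hk].
case: k hk => [|j] hk; first by rewrite subr0 E0.
have [r ->] : exists r, n = (j.+1 + r)%N by exists (n - j.+1)%N; lia.
exact: Ek.
Qed.

Lemma main_gen n : A n = qpoch q (-1) n / \prod_(i < n) qint q (p.+1 + 2 * i + 1).
Proof.
elim: n => [|n IH].
  rewrite /A big_nat1 /qpoch !big_ord0 /t /qbinom !qf0 ?subn0.
  rewrite muln0 !addn0 subSS subn0 qfS expr0 ?mulr1 ?mul1r ?invr1 ?divr1 ?mulr1 ?mul1r.
  by field; rewrite qfact_neq0 qint_neq0.
have hc : cc n != 0 by rewrite /cc qint_neq0 //; lia.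
apply: (mulfI hc); rewrite stepA IH /qpoch !big_ord_recr -/(cc n).
have hb : \prod_(i < n) qint q (p.+1 + 2 * i + 1) != 0.
  by apply/prodf_neq0 => i _; rewrite qint_neq0 //; lia.
move: (\prod_(i < n) (1 - q ^+ i * -1)) (\prod_(i < n) qint q (p.+1 + 2 * i + 1)) hb => a b hb.
rewrite /= /dd.
by field; rewrite hb hc.
Qed.
End S.

Lemma qvar_hI i : (0 < i)%N -> 1 - qvar ^+ i != 0.
Proof.
move=> hi; rewrite /qvar -tofrac1 -tofracXn -tofracB tofrac_eq0.
apply/eqP => /(congr1 (fun x : {poly rat} => x`_0)).
rewrite coefB coef1 coefXn; case: i hi => // i _ /=; rewrite subr0 => /eqP; by rewrite coef0 oner_eq0.
Qed.


Theorem mainTheorem15 (m n : nat) (hm : (1 <= m)%N) :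
  \sum_(0 <= k < n.+1)
     qbinom qvar n k * qvar ^+ 'C(k, 2) * qint qvar (m + 2 * k)
       * (qfact qvar (m + k - 1) / qfact qvar (m + n + k))
  = qpoch qvar (-1) n / \prod_(i < n) qint qvar (m + 2 * i + 1).
Proof.
case: m hm => [//|p] _.
have h1 : 1 - qvar != 0 by rewrite -{1}(expr1 qvar) qvar_hI.
exact: (main_gen _ _ h1 qvar_hI p n).
Qed.
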